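(* Let $\Gamma$ be a lattice satisfying the standing assumptions below, and let $\mathcal{F}_1,\dots,\mathcal{F}_K$ be the face-equivalence classes of $\mathcal{F}$. Let $f\in\mathcal{F}_i$ and $f'\in\mathcal{F}_j$ with $i\neq j$. Then for every face path $\rho=(f_1=f,\dots,f_m=f')$ from $f$ to $f'$, the operator $W^Z_{f,f'}(\rho)=\prod_{k=1}^m Z_{f_k}$ is a ($Z$-type) logical operator of the 3D toric code on $\Gamma$.
   Context: $\Gamma$ is a finite, connected three-dimensional cell complex with edges $C_1(\Gamma)$ (partial edges allowed at the boundary), faces $C_2(\Gamma)$, volumes $C_3(\Gamma)$; $\partial(f)$ denotes boundary edges of a face, $\partial(\nu)$ boundary faces of a volume, $\iota(e)$ the faces containing edge $e$, and $\iota(f)$ the volumes having $f$ in their boundary. Every face lies in the boundary of at most two volumes. Standing assumptions: (L1) $\Gamma$ has no boundaries in its interior; (L2) the boundary of every face of $\Gamma$ and of its dual $\Gamma^*$ is a closed path or an open path beginning and ending with partial edges; the dual complex is connected. The 3D toric code on $\Gamma$ has one qubit per face and stabilizer group generated by $B_e=\prod_{f\in\iota(e)}Z_f$ and $A_\nu=\prod_{f\in\partial(\nu)}X_f$; a logical operator is a Pauli operator commuting with all stabilizers but not in the stabilizer group (up to phase). A face path from $f_1$ to $f_m$ is a sequence of faces $(f_1,\dots,f_m)$ with pairwise distinct volumes $\nu_1,\dots,\nu_{m-1}$ such that $f_i,f_{i+1}\in\partial(\nu_i)$. Let $\mathcal{F}=\{f\in C_2(\Gamma):|\iota(f)|=1\}$.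 Two faces $f,f'\in\mathcal{F}$ are face-equivalent if there is a face path $\rho$ from $f$ to $f'$ such that $\prod_{g\in\rho}Z_g$ is a stabilizer; every face is considered equivalent to itself. As in the paper, face equivalence is taken to be an equivalence relation on $\mathcal{F}$, with classes $\mathcal{F}_1,\dots,\mathcal{F}_K$. *)

(* Defs.v *)
From mathcomp Require Import all_boot.
Set Implicit Arguments. Unset Strict Implicit. Unset Printing Implicit Defensive.

Record complex := Complex {
  edge : finType;
  face : finType;
  vol  : finType;
  bd_face : face -> {set edge};
  bd_vol  : vol -> {set face}
}.

Section Defs.
Variable G : complex.
Local Notation E := (edge G).
Local Notation F := (face G).
Local Notation V := (vol G).

Definition iota_e (e : E) : {set F} := [set f | e \in bd_face f].
Definition iota_f (f : F) : {set V} := [set v | f \in bd_vol v].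

(* Pauli operators on the face qubits, up to phase, in the binary symplectic
   representation: (X-support, Z-support). *)
Definition pauli := ({set F} * {set F})%type.

Definition commute (P Q : pauli) : bool :=
  odd #|P.1 :&: Q.2| == odd #|P.2 :&: Q.1|.

Definition B_op (e : E) : pauli := (set0, iota_e e).
Definition A_op (v : V) : pauli := (bd_vol v, set0).

(* P lies (up to phase) in the group generated by the B_e and A_nu:
   it is the product of B_e (e in SE) and A_nu (nu in SV). *)
Definition in_stab (P : pauli) : Prop :=
  exists (SE : {set E}) (SV : {set V}),
    P = ([set f | odd #|[set v in SV | f \in bd_vol v]|],
         [set f | odd #|[set e in SE | f \in iota_e e]|]).

Definition logical (P : pauli) : Prop :=
  [/\ forall e, commute P (B_op e), forall v, commute P (A_op v) & ~ in_stab P].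

Definition Zprod (s : seq F) : pauli := (set0, [set g | odd (count_mem g s)]).

Definition face_path (f f' : F) (p : seq F) : Prop :=
  exists vs : seq V,
    [/\ 0 < size p, nth f p 0 = f, last f p = f',
        size vs = (size p).-1 & uniq vs] /\
        forall i (v0 : V) (f0 : F), i < size vs ->
          (nth f0 p i \in bd_vol (nth v0 vs i)) &&
          (nth f0 p i.+1 \in bd_vol (nth v0 vs i)).

Definition calF : {set F} := [set f | #|iota_f f| == 1].

Definition face_equiv (f f' : F) : Prop :=
  f = f' \/ exists p, face_path f f' p /\ in_stab (Zprod p).

End Defs.

(* Main.v *)
Require Import Defs.
From mathcomp Require Import all_boot.

Lemma par_card (T : finType) (p : seq T) (B : {set T}) :
  odd #|[set g | odd (count_mem g p)] :&: B| = odd (count (mem B) p).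
Proof.
elim: p => [|x p IH] /=.
  rewrite (_ : _ :&: B = set0) ?cards0 //; apply/setP=> g; by rewrite !inE.
rewrite oddD -IH (cardsD1 x ([set g | odd (count_mem g p)] :&: B)).
rewrite (cardsD1 x ([set g | odd ((x == g) + count_mem g p)] :&: B)).
have -> : ([set g | odd ((x == g) + count_mem g p)] :&: B) :\ x =
          ([set g | odd (count_mem g p)] :&: B) :\ x.
  apply/setP => g; rewrite !inE; case: (eqVneq g x) => [->|ne] //=.
rewrite !inE eqxx /= !oddD.
by case: (x \in B); case: (odd (count_mem x p)); case: (odd #|_|).
Qed.

Lemma in2 (T:finType) (A : {set T}) a b : a != b -> a \in A -> b \in A ->
  #|A| <= 2 -> A = [set a; b].
Proof.
move=> nab ha hb hc; apply/eqP; rewrite eq_sym eqEcard cards2 nab hc andbT.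
by apply/subsetP => x; rewrite !inE => /orP[]/eqP->.
Qed.

Lemma in1 (T:finType) (A : {set T}) a : a \in A -> #|A| == 1 -> A = [set a].
Proof. by move=> ha /cards1P[x hx]; move: ha; rewrite hx inE => /eqP->. Qed.

Theorem lemma3 (G : complex)
  (two_vols : forall f : face G, #|iota_f f| <= 2)
  (f f' : face G) :
  f \in calF G -> f' \in calF G -> ~ face_equiv f f' ->
  forall p : seq (face G), face_path f f' p -> logical (Zprod p).
Proof.
move=> Hf Hf' Hne p Hpath.
have Hpath' := Hpath.
move: Hpath => [vs [[Hsz Hp0 Hlast Hvs Huniq] Hadj]].
split; last first.
  by move=> Hst; apply: Hne; right; exists p.
  2: by move=> e; rewrite /Defs.commute /Zprod /B_op /= set0I setI0 cards0.
move=> v; rewrite /Defs.commute /Zprod /A_op /= setI0 cards0 par_card.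
clear Hpath'.
have nff : f != f' by apply/eqP => E; apply: Hne; left.
set n := size vs.
have Hm : size p = n.+1 by rewrite /n Hvs prednK.
have n0 : 0 < n.
  case E: n => [|//]; move: nff; rewrite -Hlast -nth_last Hm E /= Hp0.
  by rewrite eqxx.
have mem_iota : forall (g : face G) w, (g \in bd_vol w) = (w \in iota_f g).
  by move=> g w; rewrite inE.
have key : forall k, k < n.+1 ->
  (nth f p k \in bd_vol v) = ((0 < k) && (nth v vs k.-1 == v)) + ((k < n) && (nth v vs k == v)) :> nat.
  move=> k kn.
  have AB : ~~ (((0 < k) && (nth v vs k.-1 == v)) && ((k < n) && (nth v vs k == v))).
    apply/negP => /andP[/andP[k0 /eqP e1] /andP[kn' /eqP e2]].
    have := nth_uniq v (leq_ltn_trans (leq_pred k) kn') kn' Huniq.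
    rewrite e1 e2 eqxx => /esym /eqP.
    by case: k k0 {kn e1 e2 kn'} => [|k] //= _ /n_Sn.
  have HA : (0 < k) -> nth f p k \in bd_vol (nth v vs k.-1).
    move=> k0; have := Hadj k.-1 v f; rewrite prednK //.
    by case/(_ _)/andP => // _; rewrite -ltnS prednK.
  have HB : k < n -> nth f p k \in bd_vol (nth v vs k).
    by move=> kn'; case/andP: (Hadj k v f kn').
  have iff : (nth f p k \in bd_vol v) =
     ((0 < k) && (nth v vs k.-1 == v)) || ((k < n) && (nth v vs k == v)).
    apply/idP/idP; last first.
      by case/orP => /andP[h /eqP <-]; [apply: HA | apply: HB].
    rewrite mem_iota.
    case: (posnP k) => [k0|k0].
      subst k; rewrite Hp0.
      have -> : iota_f f = [set nth v vs 0].
        apply: in1; last by move: Hf; rewrite inE.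
        by rewrite -mem_iota -{1}Hp0; apply: HB.
      by rewrite inE eq_sym => ->; rewrite n0.
    case: (ltnP k n) => [kn'|kn'].
      have -> : iota_f (nth f p k) = [set nth v vs k.-1; nth v vs k].
        apply: in2 => //; rewrite -?mem_iota; [|exact: HA|exact: HB].
        rewrite (nth_uniq v (leq_ltn_trans (leq_pred k) kn') kn' Huniq).
        by case: k k0 {kn kn' HA HB AB} => [|k] //= _; rewrite neq_ltn ltnSn.
      by rewrite !inE => /orP[]/eqP<-; rewrite eqxx ?orbT.
    have kE : k = n by apply/eqP; rewrite eqn_leq kn' -ltnS kn.
    have pk : nth f p k = f' by rewrite kE -Hlast -nth_last Hm.
    have -> : iota_f (nth f p k) = [set nth v vs k.-1].
      apply: in1; first by rewrite -mem_iota; apply: HA.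
      by rewrite pk; move: Hf'; rewrite inE.
    by rewrite inE eq_sym => ->.
  rewrite iff; move: AB.
  set A := (_ && (nth v vs k.-1 == v)); set B := (_ && (nth v vs k == v)).
  by case: A; case: B.
rewrite -sum1_count (big_nth f) Hm big_mkcond /=.
rewrite (eq_big_nat _ _ (F2 := fun k => ((0 < k) && (nth v vs k.-1 == v)) + ((k < n) && (nth v vs k == v)))); last first.
  by move=> k /andP[_ kn]; rewrite -key //; case: ifP.
rewrite big_split /= big_nat_recl // big_nat_recr //= ltnn /= addn0 add0n.
rewrite [X in _ + X](eq_big_nat _ _ (F2 := fun k => (nth v vs k == v : nat))); last first.
  by move=> i /andP[_ ->].
by rewrite addnn odd_double.
Qed.
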